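(* Let the setting, algorithm and $M_1$ be as in the context, and suppose $c_k\le1$ for all $k$. Then for all $k\ge0$, $$\|\mathbf g^k\|\le\|\mathbf g^k-\mathbf W^\infty\mathbf g^k\|+L_1\|\mathbf x^k-\mathbf W^\infty\mathbf x^k\|+\sqrt n\|\nabla F(\bar x^k)\|.$$ Moreover, if for some $k_0\ge0$ it holds that $M_1I_d\preceq H_i^{k_0}+MI_d\preceq M_2I_d$ for all $i$, then $$\|\mathbf x^{k_0+1}-\mathbf x^{k_0}\|\le\Big(2+\frac{2\alpha L_1}{M_1}\Big)\|\mathbf x^{k_0}-\mathbf W^\infty\mathbf x^{k_0}\|+\frac{2\alpha}{M_1}\|\mathbf g^{k_0}-\mathbf W^\infty\mathbf g^{k_0}\|+\frac{2\alpha\sqrt n}{M_1}\|\nabla F(\bar x^{k_0})\|.$$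
   Context: Setting. $n,d\ge1$; $W\in\mathbb{R}^{n\times n}$ is entrywise nonnegative, symmetric, $W1_n=1_n$, with $w_{ij}=0$ iff $j$ is neither $i$ nor a neighbor of $i$ in an undirected connected graph; $\sigma=\|W-\frac1n1_n1_n^T\|<1$. Each $f_i:\mathbb{R}^d\to\mathbb{R}$ is $C^2$ with $L_1$-Lipschitz gradient and $L_2$-Lipschitz Hessian; $F=\frac1n\sum_if_i$ with $\nabla^2F\succeq\mu I_d$, $\mu>0$, minimizer $x^*$. $\mathcal Q:\mathbb{R}^{d\times d}\to\mathbb{R}^{d\times d}$ deterministic with $\|\mathcal Q(A)-A\|_F\le(1-\delta)\|A\|_F$, $\delta\in(0,1]$, applied blockwise. Notation: $\mathbf x=[x_1;\dots;x_n]$, $\bar x=\frac1n\sum x_i$; $\mathbf H=[H_1;\dots;H_n]$; $\mathbf W=W\otimes I_d$, $\mathbf W^\infty=\frac1n1_n1_n^T\otimes I_d$; $\nabla f(\mathbf x)=[\nabla f_i(x_i)]_i$, $\nabla^2 f(\mathbf x)=[\nabla^2f_i(x_i)]_i$. Algorithm: arbitrary $\mathbf x^0$, $g_i^0=\nabla f_i(x_i^0)$, $H_i^0=\nabla^2 f_i(x_i^0)$, arbitrary $\mathbf E^0,\tilde{\mathbf H}^0$, $\alpha,\gamma>0$, integer $m\ge1$, $M\ge0$, $c_k\in[0,1]$; for $k\ge0$: $\mathbf x^{k+1}=\mathbf W^m(\mathbf x^k-\alpha\mathbf d^k)$; $\mathbf g^{k+1}=\mathbf W^m(\mathbf g^k+\nabla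 f(\mathbf x^{k+1})-\nabla f(\mathbf x^k))$; $\mathbf E^{k+1}=\mathbf E^k+\mathbf H^k-\tilde{\mathbf H}^k-\mathcal Q(\mathbf E^k+\mathbf H^k-\tilde{\mathbf H}^k)$; $\tilde{\mathbf H}^{k+1}=\tilde{\mathbf H}^k+\mathcal Q(\mathbf H^k-\tilde{\mathbf H}^k)$; $\hat{\mathbf H}^k=\tilde{\mathbf H}^k+\mathcal Q(\mathbf E^k+\mathbf H^k-\tilde{\mathbf H}^k)$; $\mathbf H^{k+1}=\mathbf H^k-\gamma(I_{nd}-\mathbf W)\hat{\mathbf H}^k+\nabla^2f(\mathbf x^{k+1})-\nabla^2f(\mathbf x^k)$; $\mathbf d^k$ satisfies $(\mathrm{diag}\{H_i^k\}+MI_{nd})\mathbf d^k=\mathbf g^k+\mathbf r^k$, $\|\mathbf r^k\|\le c_k\|\mathbf g^k\|$. Constants: $u_1^0=\|\mathbf x^0-\mathbf W^\infty\mathbf x^0\|^2+\frac{(1-\sigma^2)^2}{50L_1^2}\|\mathbf g^0-\mathbf W^\infty\mathbf g^0\|^2+2\sigma^{m-1}\frac n{L_1}(F(\bar x^0)-F(x^* ))$; $u_2^0=\frac{\delta(1-\sigma)}{8(1-\delta)}\|\mathbf E^0\|_F+\frac{1-\sigma}4\|\mathbf H^0-\tilde{\mathbf H}^0\|_F+\|\mathbf H^0-\mathbf W^\infty\mathbf H^0\|_F$; $C=\frac{3.75L_2\sqrt{\sigma^{-(m-1)}u_1^0}}{\sqrt{1-\mu\alpha/(2M_2)}-(1-\gamma(1-\sigma)/2)}$;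 $\tilde u_2^0=\max\{u_2^0-C,C\}$; $M_1=\mu+M-L_2\sqrt{u_1^0/n}-\tilde u_2^0$; $M_2=L_1+M+L_2\sqrt{u_1^0/n}+\tilde u_2^0$ (assumed $M_2\ge M_1>0$). *)

(* Defs.v *)
From HB Require Import structures.
From mathcomp Require Import all_boot all_order all_algebra.
From mathcomp Require Import all_classical all_reals all_analysis.
Set Implicit Arguments.
Unset Strict Implicit.
Unset Printing Implicit Defensive.
Import Order.TTheory GRing.Theory Num.Theory.
Import numFieldNormedType.Exports.
Local Open Scope classical_set_scope.
Local Open Scope ring_scope.

Section Defs.
Variable R : realType.

Definition mnorm (p q : nat) (A : 'M[R]_(p, q)) : R :=
  Num.sqrt (\sum_(a < p) \sum_(b < q) A a b ^+ 2).

Definition opnorm (p q : nat) (A : 'M[R]_(p, q)) : R :=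
  sup [set mnorm (A *m v) | v in [set v : 'cV[R]_q | mnorm v <= 1]].

Definition loewner_le (d : nat) (A B : 'M[R]_d) : Prop :=
  forall v : 'cV[R]_d, ((v^T *m A *m v) 0 0) <= ((v^T *m B *m v) 0 0).

(* Stacked objects [z_1; ...; z_n] are families 'I_n -> 'M_(p,q). *)
Definition snorm (n p q : nat) (z : 'I_n -> 'M[R]_(p, q)) : R :=
  Num.sqrt (\sum_(i < n) \sum_(a < p) \sum_(b < q) z i a b ^+ 2).

(* Action of A (x) I on a stacked object: block i is sum_j A_ij z_j. *)
Definition kron_apply (n p q : nat) (A : 'M[R]_n) (z : 'I_n -> 'M[R]_(p, q))
  : 'I_n -> 'M[R]_(p, q) := fun i => \sum_(j < n) A i j *: z j.

(* Average (bar z) and W^infty z = 1_n (x) bar z. *)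
Definition avg (n p q : nat) (z : 'I_n -> 'M[R]_(p, q)) : 'M[R]_(p, q) :=
  (n%:R)^-1 *: \sum_(j < n) z j.

Definition Winf (n p q : nat) (z : 'I_n -> 'M[R]_(p, q)) : 'I_n -> 'M[R]_(p, q) :=
  fun _ => avg z.

Definition consdev (n p q : nat) (z : 'I_n -> 'M[R]_(p, q)) : 'I_n -> 'M[R]_(p, q) :=
  fun i => z i - avg z.

Definition sdiff (n p q : nat) (z z' : 'I_n -> 'M[R]_(p, q)) : 'I_n -> 'M[R]_(p, q) :=
  fun i => z i - z' i.

Definition Jn (n : nat) : 'M[R]_n := (n%:R)^-1 *: const_mx 1.

Definition sigmaW (n : nat) (W : 'M[R]_n) : R := opnorm (W - Jn n).

End Defs.

(* Main.v *)
Require Import Defs.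
From HB Require Import structures.
From mathcomp Require Import all_boot all_order all_algebra.
From mathcomp Require Import all_classical all_reals all_analysis.
From mathcomp Require Import ring lra.
Import Order.TTheory GRing.Theory Num.Theory.
Import numFieldNormedType.Exports.
Local Open Scope classical_set_scope.
Local Open Scope ring_scope.

Set Implicit Arguments.
Unset Strict Implicit.
Section NormLemmas.
Variable R : realType.

Definition sumsq {I : finType} (u : I -> R) := \sum_i u i ^+ 2.
Definition NN {I : finType} (u : I -> R) := Num.sqrt (sumsq u).

Lemma sumsq_ge0 {I : finType} (u : I -> R) : 0 <= sumsq u.
Proof. by apply: sumr_ge0 => i _; rewrite sqr_ge0. Qed.

Lemma NN_ge0 {I : finType} (u : I -> R) : 0 <= NN u.
Proof. exact: sqrtr_ge0. Qed.

Lemma NN_sq {I : finType} (u : I -> R) : NN u ^+ 2 = sumsq u.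
Proof. by rewrite sqr_sqrtr // sumsq_ge0. Qed.

Lemma sumsq0 {I : finType} (u : I -> R) : sumsq u = 0 -> forall i, u i = 0.
Proof.
move=> h i; have := @psumr_eq0P _ _ predT (fun i => u i ^+ 2) (fun j _ => sqr_ge0 (u j)) h i isT.
by move/eqP; rewrite sqrf_eq0 => /eqP.
Qed.

Lemma CS {I : finType} (u v : I -> R) : \sum_i u i * v i <= NN u * NN v.
Proof.
set s := NN u; set t := NN v.
have [s0|spos] := eqVneq s 0.
  have : sumsq u = 0.
    by move: s0; rewrite /s /NN => /eqP; rewrite sqrtr_eq0 => h; apply/le_anti; rewrite h sumsq_ge0.
  move/sumsq0 => u0; rewrite big1 ?s0 ?mul0r // => i _; by rewrite u0 mul0r.
have [t0|tpos] := eqVneq t 0.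
  have : sumsq v = 0.
    by move: t0; rewrite /t /NN => /eqP; rewrite sqrtr_eq0 => h; apply/le_anti; rewrite h sumsq_ge0.
  move/sumsq0 => v0; rewrite big1 ?t0 ?mulr0 // => i _; by rewrite v0 mulr0.
have sp : 0 < s by rewrite lt0r spos NN_ge0.
have tp : 0 < t by rewrite lt0r tpos NN_ge0.
have key : 0 <= \sum_i (u i * t - v i * s) ^+ 2 by apply: sumr_ge0 => i _; apply: sqr_ge0.
have E : \sum_i (u i * t - v i * s) ^+ 2 =
   t ^+ 2 * sumsq u + s ^+ 2 * sumsq v - 2 * s * t * \sum_i u i * v i.
  rewrite /sumsq !mulr_sumr -big_split -sumrB /=; apply: eq_bigr => i _; ring.
rewrite E -!NN_sq -/s -/t in key.
have : s * t * (\sum_i u i * v i) <= s * t * (s * t).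
  rewrite -subr_ge0; move: key; rewrite -(@pmulr_rge0 _ 2) //.
  by congr (0 <= _); ring.
by rewrite ler_pM2l ?mulr_gt0.
Qed.

Lemma NN_le {I : finType} (u v : I -> R) :
  (forall i, 0 <= u i <= v i) -> NN u <= NN v.
Proof.
move=> h; rewrite /NN ler_wsqrtr //; apply: ler_sum => i _.
by case/andP: (h i) => h1 h2; rewrite lerXn2r // ?nnegrE // (le_trans h1 h2).
Qed.

Lemma NN_add {I : finType} (u v : I -> R) :
  NN (fun i => u i + v i) <= NN u + NN v.
Proof.
rewrite /NN -(ger0_norm (addr_ge0 (NN_ge0 u) (NN_ge0 v))) -sqrtr_sqr.
rewrite ler_wsqrtr //.
have -> : sumsq (fun i => u i + v i) = sumsq u + sumsq v + 2 * \sum_i u i * v i.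
  rewrite /sumsq mulr_sumr -!big_split /=; apply: eq_bigr => i _; ring.
have := CS u v; rewrite sqrrD -!NN_sq /NN => h; lra.
Qed.

Lemma NN_scale {I : finType} (c : R) (u : I -> R) :
  NN (fun i => c * u i) = `|c| * NN u.
Proof.
rewrite /NN /sumsq.
have -> : \sum_i (c * u i) ^+ 2 = c ^+ 2 * \sum_i u i ^+ 2.
  by rewrite mulr_sumr; apply: eq_bigr => i _; rewrite exprMn.
by rewrite sqrtrM ?sqr_ge0 // sqrtr_sqr.
Qed.


Lemma mnormE p q (A : 'M[R]_(p, q)) : mnorm A = NN (fun t : 'I_p * 'I_q => A t.1 t.2).
Proof. by rewrite /mnorm /NN /sumsq pair_big. Qed.

Lemma mnorm_ge0 p q (A : 'M[R]_(p, q)) : 0 <= mnorm A.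
Proof. exact: sqrtr_ge0. Qed.

Lemma mnorm_add p q (A B : 'M[R]_(p, q)) : mnorm (A + B) <= mnorm A + mnorm B.
Proof.
rewrite !mnormE.
have -> : (fun t : 'I_p * 'I_q => (A + B) t.1 t.2) = (fun t => A t.1 t.2 + B t.1 t.2).
  by apply: funext => t; rewrite mxE.
exact: NN_add.
Qed.

Lemma mnorm_scale p q (c : R) (A : 'M[R]_(p, q)) : mnorm (c *: A) = `|c| * mnorm A.
Proof.
rewrite !mnormE -NN_scale.
by congr NN; apply: funext => t; rewrite mxE.
Qed.

Lemma mnorm_opp p q (A : 'M[R]_(p, q)) : mnorm (- A) = mnorm A.
Proof. by rewrite -scaleN1r mnorm_scale normrN normr1 mul1r. Qed.

Lemma mnorm0 p q : mnorm (0 : 'M[R]_(p, q)) = 0.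
Proof.
rewrite /mnorm big1 ?sqrtr0 // => i _; rewrite big1 // => j _; by rewrite mxE expr0n.
Qed.

Lemma mnorm_sum p q (I : Type) (r : seq I) (P : pred I) (F : I -> 'M[R]_(p, q)) :
  mnorm (\sum_(i <- r | P i) F i) <= \sum_(i <- r | P i) mnorm (F i).
Proof.
apply: (big_rec2 (fun a b => mnorm a <= b)); first by rewrite mnorm0.
move=> i y1 y2 _ h /=; apply: (@le_trans _ _ (mnorm (F i) + mnorm y1)); [exact: mnorm_add | by rewrite lerD2l].
Qed.

Lemma mnorm_cV k (v : 'cV[R]_k) : mnorm v = NN (fun a => v a 0).
Proof. by rewrite /mnorm /NN /sumsq; congr Num.sqrt; apply: eq_bigr => a _; rewrite big_ord1. Qed.

Lemma snormE n p q (z : 'I_n -> 'M[R]_(p, q)) : snorm z = NN (fun i => mnorm (z i)).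
Proof.
rewrite /snorm /NN /sumsq; congr Num.sqrt; apply: eq_bigr => i _.
rewrite /mnorm sqr_sqrtr //; apply: sumr_ge0 => a _; apply: sumr_ge0 => b _; exact: sqr_ge0.
Qed.

Lemma snorm_ge0 n p q (z : 'I_n -> 'M[R]_(p, q)) : 0 <= snorm z.
Proof. exact: sqrtr_ge0. Qed.

Lemma snorm_le n p q (z w : 'I_n -> 'M[R]_(p, q)) (c : R) : 0 <= c ->
  (forall i, mnorm (z i) <= c * mnorm (w i)) -> snorm z <= c * snorm w.
Proof.
move=> c0 h; rewrite !snormE -(ger0_norm c0) -NN_scale; apply: NN_le => i.
by rewrite mnorm_ge0 h.
Qed.

Lemma snorm_add n p q (z w : 'I_n -> 'M[R]_(p, q)) :
  snorm (fun i => z i + w i) <= snorm z + snorm w.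
Proof.
rewrite !snormE.
apply: (@le_trans _ _ (NN (fun i => mnorm (z i) + mnorm (w i)))); last exact: NN_add.
apply: NN_le => i; by rewrite mnorm_ge0 mnorm_add.
Qed.

Lemma snorm_scale n p q (c : R) (z : 'I_n -> 'M[R]_(p, q)) :
  snorm (fun i => c *: z i) = `|c| * snorm z.
Proof.
rewrite !snormE.
have -> : (fun i => mnorm (c *: z i)) = (fun i => `|c| * mnorm (z i)).
  by apply: funext => i; exact: mnorm_scale.
by rewrite NN_scale normr_id.
Qed.

Lemma snorm_opp n p q (z : 'I_n -> 'M[R]_(p, q)) :
  snorm (fun i => - z i) = snorm z.
Proof. rewrite !snormE; congr NN; apply: funext => i /=; exact: mnorm_opp. Qed.

Lemma jensen n (P : 'I_n -> R) (m : 'I_n -> R) :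
  (forall j, 0 <= P j) -> \sum_j P j = 1 ->
  (\sum_j P j * m j) ^+ 2 <= \sum_j P j * m j ^+ 2.
Proof.
move=> P0 P1.
have E : forall mu, \sum_j P j * (m j - mu) ^+ 2 =
   \sum_j P j * m j ^+ 2 - 2 * mu * (\sum_j P j * m j) + mu ^+ 2 * \sum_j P j.
  move=> mu; rewrite !mulr_sumr -sumrB -big_split /=; apply: eq_bigr => j _; ring.
have key : 0 <= \sum_j P j * (m j - \sum_j P j * m j) ^+ 2.
  by apply: sumr_ge0 => j _; apply: mulr_ge0 => //; exact: sqr_ge0.
move: key; rewrite E P1; lra.
Qed.

Lemma kron_norm n p q (P : 'M[R]_n) (z : 'I_n -> 'M[R]_(p, q)) :
  (forall i j, 0 <= P i j) -> (forall i, \sum_j P i j = 1) -> (forall j, \sum_i P i j = 1) ->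
  snorm (kron_apply P z) <= snorm z.
Proof.
move=> P0 Pr Pc; rewrite !snormE.
apply: (@le_trans _ _ (NN (fun i => \sum_j P i j * mnorm (z j)))).
  apply: NN_le => i; rewrite mnorm_ge0 /=; apply: le_trans; first exact: mnorm_sum.
  by apply: ler_sum => j _; rewrite mnorm_scale ger0_norm.
rewrite /NN ler_wsqrtr //; apply: (@le_trans _ _ (\sum_i \sum_j P i j * mnorm (z j) ^+ 2)).
  by apply: ler_sum => i _; apply: jensen.
rewrite exchange_big /=; apply: ler_sum => j _.
by rewrite -mulr_suml Pc mul1r.
Qed.


Definition stoch {n} (P : 'M[R]_n) :=
  [/\ forall i j, 0 <= P i j, forall i, \sum_j P i j = 1 & forall j, \sum_i P i j = 1].

Lemma mulE n (A B : 'M[R]_n) i j : (A * B) i j = \sum_k A i k * B k j.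
Proof. by rewrite -mulmxE mxE. Qed.

Lemma stoch_mul n (A B : 'M[R]_n) : stoch A -> stoch B -> stoch (A * B).
Proof.
move=> [An Ar Ac] [Bn Br Bc]; split.
- move=> i j; rewrite mulE; apply: sumr_ge0 => k _; exact: mulr_ge0.
- move=> i; under eq_bigr do rewrite mulE.
  rewrite exchange_big /=; under eq_bigr do rewrite -mulr_sumr Br mulr1; exact: Ar.
- move=> j; under eq_bigr do rewrite mulE.
  rewrite exchange_big /=; under eq_bigr do rewrite -mulr_suml Ac mul1r; exact: Bc.
Qed.

Lemma stoch_pow n (W : 'M[R]_n) m : stoch W -> (1 <= m)%N -> stoch (W ^+ m).
Proof.
move=> sW; elim: m => [//|m IH] _.
case: m IH => [|m] IH; first by rewrite expr1.
by rewrite exprS; apply: stoch_mul => //; apply: IH.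
Qed.

Lemma avg_kron n p q (P : 'M[R]_n) (z : 'I_n -> 'M[R]_(p, q)) :
  (forall j, \sum_i P i j = 1) -> avg (kron_apply P z) = avg z.
Proof.
move=> Pc; rewrite /avg /kron_apply; congr (_ *: _).
rewrite exchange_big /=; apply: eq_bigr => j _; by rewrite -scaler_suml Pc scale1r.
Qed.

Lemma kron_const n p q (P : 'M[R]_n) (a : 'M[R]_(p, q)) i :
  (forall i, \sum_j P i j = 1) -> kron_apply P (fun _ => a) i = a.
Proof. by move=> Pr; rewrite /kron_apply -scaler_suml Pr scale1r. Qed.

Lemma avgD n p q (z w : 'I_n -> 'M[R]_(p, q)) :
  avg (fun j => z j + w j) = avg z + avg w.
Proof. by rewrite /avg big_split scalerDr. Qed.

Lemma avgB n p q (z w : 'I_n -> 'M[R]_(p, q)) :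
  avg (fun j => z j - w j) = avg z - avg w.
Proof. by rewrite /avg sumrB scalerBr. Qed.

Lemma loewner_lb k (c : R) (A : 'M[R]_k) (v : 'cV[R]_k) :
  0 < c -> loewner_le (c%:M) A -> c * mnorm v <= mnorm (A *m v).
Proof.
move=> c0 h; have := h v.
rewrite mul_mx_scalar -scalemxAl mxE -mulmxA mxE.
have -> : \sum_j v^T 0 j * v j 0 = mnorm v ^+ 2.
  rewrite mnorm_cV NN_sq /sumsq; apply: eq_bigr => a _; by rewrite mxE expr2.
rewrite mxE; under eq_bigr do rewrite [_^T _ _]mxE.
move=> h2; have h3 := le_trans h2 (CS _ _); rewrite -!mnorm_cV in h3.
have [v0|vpos] := eqVneq (mnorm v) 0; first by rewrite v0 mulr0 mnorm_ge0.
have vp : 0 < mnorm v by rewrite lt0r vpos mnorm_ge0.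
rewrite -(ler_pM2l vp). by rewrite mulrCA -expr2.
Qed.

End NormLemmas.

Unset Implicit Arguments.

Theorem lemma2
  (R : realType) (n d : nat) (hn : (1 <= n)%N) (hd : (1 <= d)%N)
  (* graph and mixing matrix *)
  (adj : rel 'I_n) (W : 'M[R]_n)
  (adj_sym : forall i j, adj i j = adj j i)
  (adj_irr : forall i, ~~ adj i i)
  (adj_conn : forall i j, connect adj i j)
  (W_nonneg : forall i j, 0 <= W i j)
  (W_sym : W^T = W)
  (W_stoch : forall i, \sum_(j < n) W i j = 1)
  (W_supp : forall i j, W i j = 0 <-> (j != i) && ~~ adj i j)
  (W_sigma : sigmaW W < 1)
  (* local functions, gradients, Hessians *)
  (f : 'I_n -> 'cV[R]_d -> R) (grad : 'I_n -> 'cV[R]_d -> 'cV[R]_d)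
  (hess : 'I_n -> 'cV[R]_d -> 'M[R]_d) (L1 L2 mu : R)
  (f_grad : forall i (x v : 'cV[R]_d), is_derive x v (f i) (((grad i x)^T *m v) 0 0))
  (f_hess : forall i (x v : 'cV[R]_d), is_derive x v (grad i) (hess i x *m v))
  (grad_lip : forall i (x y : 'cV[R]_d), mnorm (grad i x - grad i y) <= L1 * mnorm (x - y))
  (hess_lip : forall i (x y : 'cV[R]_d), opnorm (hess i x - hess i y) <= L2 * mnorm (x - y))
  (mu_pos : 0 < mu)
  (F_strong : forall x : 'cV[R]_d,
     loewner_le (mu%:M) ((n%:R)^-1 *: \sum_(i < n) hess i x))
  (xstar : 'cV[R]_d)
  (xstar_min : forall y : 'cV[R]_d,
     (n%:R)^-1 * \sum_(i < n) f i xstar <= (n%:R)^-1 * \sum_(i < n) f i y)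
  (* compression operator *)
  (Q : 'M[R]_d -> 'M[R]_d) (delta : R)
  (delta_pos : 0 < delta) (delta_le1 : delta <= 1)
  (Q_contr : forall A : 'M[R]_d, mnorm (Q A - A) <= (1 - delta) * mnorm A)
  (* algorithm parameters *)
  (alpha gamma M : R) (m : nat) (c : nat -> R)
  (alpha_pos : 0 < alpha) (gamma_pos : 0 < gamma) (m_pos : (1 <= m)%N)
  (M_nonneg : 0 <= M) (c_nonneg : forall k, 0 <= c k) (c_le1 : forall k, c k <= 1)
  (* algorithm iterates *)
  (x g dir r : nat -> 'I_n -> 'cV[R]_d)
  (E Ht H : nat -> 'I_n -> 'M[R]_d)
  (g0 : forall i, g 0%N i = grad i (x 0%N i))
  (H0 : forall i, H 0%N i = hess i (x 0%N i))
  (x_rec : forall k i, x k.+1 i =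
     kron_apply (W ^+ m) (fun j => x k j - alpha *: dir k j) i)
  (g_rec : forall k i, g k.+1 i =
     kron_apply (W ^+ m) (fun j => g k j + grad j (x k.+1 j) - grad j (x k j)) i)
  (E_rec : forall k i, E k.+1 i =
     E k i + H k i - Ht k i - Q (E k i + H k i - Ht k i))
  (Ht_rec : forall k i, Ht k.+1 i = Ht k i + Q (H k i - Ht k i))
  (H_rec : forall k i, H k.+1 i =
     let Hhat := fun j => Ht k j + Q (E k j + H k j - Ht k j) in
     H k i - gamma *: (Hhat i - kron_apply W Hhat i)
       + hess i (x k.+1 i) - hess i (x k i))
  (dir_eq : forall k i, (H k i + M%:M) *m dir k i = g k i + r k i)
  (r_bound : forall k, snorm (r k) <= c k * snorm (g k))
  (* constants *)
  (C M1 M2 : R)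
  (hC : let sigma := sigmaW W in
        let F := fun y => (n%:R)^-1 * \sum_(i < n) f i y in
        let u1 := snorm (consdev (x 0%N)) ^+ 2
                  + (1 - sigma ^+ 2) ^+ 2 / (50%:R * L1 ^+ 2) * snorm (consdev (g 0%N)) ^+ 2
                  + 2%:R * sigma ^+ (m.-1) * n%:R / L1 * (F (avg (x 0%N)) - F xstar) in
        C = 15%:R / 4%:R * L2 * Num.sqrt ((sigma ^+ (m.-1))^-1 * u1)
            / (Num.sqrt (1 - mu * alpha / (2%:R * M2)) - (1 - gamma * (1 - sigma) / 2%:R)))
  (hM1 : let sigma := sigmaW W in
        let F := fun y => (n%:R)^-1 * \sum_(i < n) f i y in
        let u1 := snorm (consdev (x 0%N)) ^+ 2
                  + (1 - sigma ^+ 2) ^+ 2 / (50%:R * L1 ^+ 2) * snorm (consdev (g 0%N)) ^+ 2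
                  + 2%:R * sigma ^+ (m.-1) * n%:R / L1 * (F (avg (x 0%N)) - F xstar) in
        let u2 := delta * (1 - sigma) / (8%:R * (1 - delta)) * snorm (E 0%N)
                  + (1 - sigma) / 4%:R * snorm (sdiff (H 0%N) (Ht 0%N))
                  + snorm (consdev (H 0%N)) in
        let tu2 := Num.max (u2 - C) C in
        M1 = mu + M - L2 * Num.sqrt (u1 / n%:R) - tu2)
  (hM2 : let sigma := sigmaW W in
        let F := fun y => (n%:R)^-1 * \sum_(i < n) f i y in
        let u1 := snorm (consdev (x 0%N)) ^+ 2
                  + (1 - sigma ^+ 2) ^+ 2 / (50%:R * L1 ^+ 2) * snorm (consdev (g 0%N)) ^+ 2
                  + 2%:R * sigma ^+ (m.-1) * n%:R / L1 * (F (avg (x 0%N)) - F xstar) in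
        let u2 := delta * (1 - sigma) / (8%:R * (1 - delta)) * snorm (E 0%N)
                  + (1 - sigma) / 4%:R * snorm (sdiff (H 0%N) (Ht 0%N))
                  + snorm (consdev (H 0%N)) in
        let tu2 := Num.max (u2 - C) C in
        M2 = L1 + M + L2 * Num.sqrt (u1 / n%:R) + tu2)
  (hM1pos : 0 < M1) (hM12 : M1 <= M2) :
  let gradF := fun y : 'cV[R]_d => (n%:R)^-1 *: \sum_(i < n) grad i y in
  (forall k : nat,
     snorm (g k) <= snorm (consdev (g k)) + L1 * snorm (consdev (x k))
                    + Num.sqrt (n%:R) * mnorm (gradF (avg (x k)))) /\
  (forall k0 : nat,
     (forall i, loewner_le (M1%:M) (H k0 i + M%:M) /\ loewner_le (H k0 i + M%:M) (M2%:M)) ->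
     snorm (sdiff (x k0.+1) (x k0)) <=
       (2%:R + 2%:R * alpha * L1 / M1) * snorm (consdev (x k0))
       + 2%:R * alpha / M1 * snorm (consdev (g k0))
       + 2%:R * alpha * Num.sqrt (n%:R) / M1 * mnorm (gradF (avg (x k0)))).

Proof.
move=> gradF.
set P := W ^+ m.
have Wcol : forall j, \sum_i W i j = 1.
  move=> j; rewrite -(W_stoch j); apply: eq_bigr => i _.
  by rewrite -{1}W_sym mxE.
have [Pnn Prow Pcol] : stoch P by apply: stoch_pow.
have ginv : forall k, avg (g k) = avg (fun i => grad i (x k i)).
  elim=> [|k IH]; first by congr avg; apply: funext => i; rewrite g0.
  have -> : g k.+1 = kron_apply P (fun j => g k j + grad j (x k.+1 j) - grad j (x k j)).
    by apply: funext => i; rewrite g_rec.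
  rewrite avg_kron // avgB avgD IH.
  by rewrite addrAC subrr add0r.
have nR0 : 0 < (n%:R : R) by rewrite ltr0n.
have sqn : Num.sqrt (n%:R : R) ^+ 2 = n%:R by rewrite sqr_sqrtr // ltW.
have L10 : 0 <= L1.
  have h := grad_lip (Ordinal hn) 0 (const_mx 1).
  have hp : 0 < mnorm (0 - const_mx 1 : 'cV[R]_d).
    rewrite sub0r mnorm_opp mnorm_cV /NN /sumsq sqrtr_gt0.
    under eq_bigr do rewrite mxE expr1n.
    by rewrite sumr_const card_ord ltr0n.
  by have := le_trans (mnorm_ge0 _) h; rewrite pmulr_lge0.
have part1 : forall k : nat,
     snorm (g k) <= snorm (consdev (g k)) + L1 * snorm (consdev (x k))
                    + Num.sqrt (n%:R) * mnorm (gradF (avg (x k))).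
  move=> k.
  set Sx := snorm (consdev (x k)); set xb := avg (x k); set s := Num.sqrt (n%:R : R).
  have s0 : 0 <= s by exact: sqrtr_ge0.
  have zA : snorm (g k) <= snorm (consdev (g k)) + snorm (Winf (g k)).
    rewrite {1}(_ : g k = (fun i => consdev (g k) i + Winf (g k) i)).
      exact: snorm_add.
    by apply: funext => i; rewrite /consdev /Winf subrK.
  have zB : snorm (Winf (g k)) = s * mnorm (avg (g k)).
    rewrite snormE /NN /sumsq /Winf sumr_const card_ord -mulr_natl sqrtrM ?ler0n //.
    by rewrite sqrtr_sqr ger0_norm // mnorm_ge0.
  have zC : mnorm (avg (g k)) <= mnorm (gradF xb) + n%:R^-1 * (L1 * \sum_i mnorm (consdev (x k) i)).
    have -> : avg (g k) = gradF xb + n%:R^-1 *: \sum_i (grad i (x k i) - grad i xb).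
      by rewrite ginv /avg /gradF -scalerDr sumrB addrC subrK.
    apply: le_trans; first exact: mnorm_add.
    rewrite lerD2l mnorm_scale ger0_norm ?invr_ge0 ?ler0n // ler_wpM2l ?invr_ge0 ?ler0n //.
    apply: le_trans; first exact: mnorm_sum.
    rewrite mulr_sumr; apply: ler_sum => i _; exact: grad_lip.
  have zD : \sum_i mnorm (consdev (x k) i) <= s * Sx.
    have := CS (fun _ : 'I_n => 1) (fun i => mnorm (consdev (x k) i)).
    rewrite /Sx snormE.
    have -> : NN (fun _ : 'I_n => (1 : R)) = s by rewrite /NN /sumsq expr1n sumr_const card_ord.
    by under eq_bigr do rewrite mul1r.
  have zE : s * (n%:R^-1 * (L1 * \sum_i mnorm (consdev (x k) i))) <= L1 * Sx.
    apply: (@le_trans _ _ (s * (n%:R^-1 * (L1 * (s * Sx))))).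
      by rewrite ler_wpM2l // ler_wpM2l ?invr_ge0 ?ler0n // ler_wpM2l.
    have -> : s * (n%:R^-1 * (L1 * (s * Sx))) = L1 * Sx * (s ^+ 2 * n%:R^-1) by ring.
    by rewrite sqn mulfV ?mulr1 // gt_eqF.
  have := ler_wpM2l s0 zC; rewrite mulrDr => zF.
  rewrite -/s; lra.
split => //.
move=> k0 hL.
have hdir : forall i, mnorm (dir k0 i) <= M1^-1 * mnorm (g k0 i + r k0 i).
  move=> i; have := loewner_lb (dir k0 i) hM1pos (proj1 (hL i)); rewrite dir_eq => h.
  by rewrite -(ler_pM2l hM1pos) mulrA mulfV ?mul1r // gt_eqF.
have hsd : snorm (dir k0) <= M1^-1 * (2 * snorm (g k0)).
  apply: (@le_trans _ _ (M1^-1 * snorm (fun i => g k0 i + r k0 i))).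
    by apply: snorm_le => //; rewrite invr_ge0 ltW.
  apply: ler_wpM2l; first by rewrite invr_ge0 ltW.
  apply: le_trans; first exact: snorm_add.
  have := r_bound k0; have := c_le1 k0; have := c_nonneg k0; have := snorm_ge0 (g k0).
  move=> h1 h2 h3 h4; nra.
have hdec : sdiff (x k0.+1) (x k0) = fun i => kron_apply P (consdev (x k0)) i
     - consdev (x k0) i - alpha *: kron_apply P (dir k0) i.
  apply: funext => i; rewrite /sdiff x_rec /kron_apply /consdev -/P.
  have e1 : \sum_(j < n) P i j *: (x k0 j - alpha *: dir k0 j) =
     \sum_(j < n) P i j *: x k0 j - alpha *: \sum_(j < n) P i j *: dir k0 j.
    rewrite scaler_sumr -sumrB; apply: eq_bigr => j _; by rewrite scalerBr !scalerA mulrC.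
  have e2 : \sum_(j < n) P i j *: (x k0 j - avg (x k0)) =
     \sum_(j < n) P i j *: x k0 j - avg (x k0).
    rewrite -{2}(scale1r (avg (x k0))) -(Prow i) scaler_suml -sumrB.
    by apply: eq_bigr => j _; rewrite scalerBr.
  rewrite e1 e2 opprB addrA subrK; exact: addrAC.
rewrite hdec.
have b1 : snorm (fun i => kron_apply P (consdev (x k0)) i - consdev (x k0) i
     - alpha *: kron_apply P (dir k0) i) <=
   snorm (kron_apply P (consdev (x k0))) + snorm (consdev (x k0)) + alpha * snorm (kron_apply P (dir k0)).
  apply: le_trans; first exact: snorm_add.
  rewrite snorm_opp snorm_scale (ger0_norm (ltW alpha_pos)).
  apply: lerD => //.
  apply: le_trans; first exact: snorm_add.
  by rewrite snorm_opp.
have ka := kron_norm (consdev (x k0)) Pnn Prow Pcol.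
have kc := kron_norm (dir k0) Pnn Prow Pcol.
have p1 := part1 k0.
have t0 : 0 <= alpha * M1^-1 by rewrite mulr_ge0 ?invr_ge0 ?ltW.
have b2 : alpha * snorm (kron_apply P (dir k0)) <= alpha * M1^-1 * (2 * snorm (g k0)).
  rewrite -mulrA; apply: ler_wpM2l; first exact: ltW.
  exact: le_trans kc hsd.
have b3 := ler_wpM2l t0 p1.
apply: le_trans b1 _.
rewrite !mulrA in b2 b3 *.
lra.
Qed.
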